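(* Let $F:\mathbb{R}^n\rightrightarrows\mathbb{R}^p$ be a nearly convex set-valued mapping and $\Omega\subset\mathbb{R}^n$ a nearly convex set with $\operatorname{ri}(\operatorname{dom} F)\cap\operatorname{ri}\Omega\neq\emptyset$. Then the restriction $F_\Omega$ is nearly convex and $$\operatorname{ri}(\operatorname{gph} F_\Omega)=\{(x,y)\in\mathbb{R}^n\times\mathbb{R}^p: x\in\operatorname{ri}(\operatorname{dom} F)\cap\operatorname{ri}\Omega,\ y\in\operatorname{ri} F(x)\}.$$
   Context: A set $\Omega\subset\mathbb{R}^k$ is nearly convex if there is a convex set $C$ with $C\subset\Omega\subset\overline{C}$. For an arbitrary set $\Omega$, $\operatorname{ri}\Omega=\{a\in\Omega:\exists\delta>0,\ B(a;\delta)\cap\operatorname{aff}\Omega\subset\Omega\}$. For $F:\mathbb{R}^n\rightrightarrows\mathbb{R}^p$: $\operatorname{dom} F=\{x:F(x)\neq\emptyset\}$, $\operatorname{gph} F=\{(x,y):y\in F(x)\}$; $F$ is nearly convex if $\operatorname{gph} F$ is nearly convex. The restriction of $F$ to $\Omega$ is $F_\Omega(x)=F(x)$ if $x\in\Omega$ and $F_\Omega(x)=\emptyset$ otherwise. *)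

(* Defs.v *)
From HB Require Import structures.
From mathcomp Require Import all_boot all_order all_algebra.
From mathcomp Require Import all_classical all_reals all_analysis.
Set Implicit Arguments. Unset Strict Implicit. Unset Printing Implicit Defensive.
Import Order.TTheory GRing.Theory Num.Theory.
Import numFieldNormedType.Exports.
Local Open Scope classical_set_scope.
Local Open Scope ring_scope.

Section Defs.
Variable R : realType.
Variable V : normedModType R.

Definition convex_set (C : set V) : Prop :=
  forall x y, C x -> C y -> forall t : R, 0 <= t -> t <= 1 ->
    C (t *: x + (1 - t) *: y).

Definition affine_set (A : set V) : Prop :=
  forall x y, A x -> A y -> forall t : R, A (t *: x + (1 - t) *: y).

Definition aff (Omega : set V) : set V :=
  \bigcap_(A in [set A | affine_set A /\ Omega `<=` A]) A.

Definition nearly_convex (Omega : set V) : Prop :=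
  exists C : set V, convex_set C /\ C `<=` Omega /\ Omega `<=` closure C.

Definition ri (Omega : set V) : set V :=
  [set a | Omega a /\ exists2 delta : R, 0 < delta &
            ball a delta `&` aff Omega `<=` Omega].
End Defs.

Section SetValued.
Variables (R : realType) (n p : nat).

Definition sv_dom (F : 'rV[R]_n -> set 'rV[R]_p) : set 'rV[R]_n :=
  [set x | F x !=set0].

Definition sv_gph (F : 'rV[R]_n -> set 'rV[R]_p) : set ('rV[R]_n * 'rV[R]_p) :=
  [set z | F z.1 z.2].

Definition sv_nearly_convex (F : 'rV[R]_n -> set 'rV[R]_p) : Prop :=
  nearly_convex (sv_gph F).

Definition sv_restrict (F : 'rV[R]_n -> set 'rV[R]_p) (Omega : set 'rV[R]_n)
  : 'rV[R]_n -> set 'rV[R]_p :=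
  fun x => if `[< Omega x >] then F x else set0.
End SetValued.

(* Main.v *)
Require Import Defs.
From HB Require Import structures.
From mathcomp Require Import all_boot all_order all_algebra.
From mathcomp Require Import all_classical all_reals all_analysis.
From mathcomp Require Import ring lra.
Set Implicit Arguments. Unset Strict Implicit. Unset Printing Implicit Defensive.
Import Order.TTheory GRing.Theory Num.Theory.
Import numFieldNormedType.Exports.
Local Open Scope classical_set_scope.
Local Open Scope ring_scope.
Section Gen.
Variables (R : realType) (V : normedModType R).
Implicit Types (S A C K G : set V) (x y z w a b : V).

Lemma ballP x e y : ball x e y <-> `|x - y| < e.
Proof. by rewrite -ball_normE. Qed.

Lemma closure_normP A x :
  closure A x <-> forall e, 0 < e -> exists a, A a /\ `|x - a| < e.
Proof.
split.
  move=> cx e e0; have [a [Aa /ballP bxa]] := cx _ (nbhsx_ballx _ _ e0).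
  by exists a.
move=> H B /nbhs_ballP [e /= e0 sB].
have [a [Aa xa]] := H e e0; exists a; split=> //; apply: sB; exact/ballP.
Qed.

Lemma aff_affine S : affine_set (aff S).
Proof.
move=> x y ax ay t A [hA sA]; apply: (hA); [exact: (ax A (conj hA sA))|exact: (ay A (conj hA sA))].
Qed.

Lemma sub_aff S : S `<=` aff S.
Proof. by move=> x Sx A [_ sA]; apply: sA. Qed.

Lemma aff_min S A : affine_set A -> S `<=` A -> aff S `<=` A.
Proof. by move=> hA sA x; apply; split. Qed.

Lemma aff_mono S A : S `<=` A -> aff S `<=` aff A.
Proof. move=> sA; apply: aff_min; first exact: aff_affine.
by move=> x /sA; apply: sub_aff. Qed.

Lemma ri_sub S : ri S `<=` S.
Proof. by move=> x []. Qed.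

Lemma comb_same (t : R) x : t *: x + (1 - t) *: x = x.
Proof. by rewrite -scalerDl addrC subrK scale1r. Qed.

Lemma ext_comb z w (e : R) : 0 < e ->
  z = (e / (1 + e)) *: w + (1 - e / (1 + e)) *: ((1 + e) *: z + (1 - (1 + e)) *: w).
Proof.
move=> e0; have e1 : 1 + e != 0 by rewrite gt_eqF // ltr_wpDr // ltW.
rewrite scalerDr !scalerA addrCA -scalerDl.
have -> : e / (1 + e) + (1 - e / (1 + e)) * (1 - (1 + e)) = 0 by field.
have -> : (1 - e / (1 + e)) * (1 + e) = 1 by field.
by rewrite scale0r addr0 scale1r.
Qed.

End Gen.
Section Gen2.
Variables (R : realType) (V : normedModType R).

Lemma inv_comb1 (t : R) (z b : V) : t != 0 ->
  t *: (t^-1 *: (z - (1 - t) *: b)) + (1 - t) *: b = z.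
Proof. by move=> t0; rewrite scalerA mulfV // scale1r subrK. Qed.

Lemma inv_comb2 (t : R) (z b : V) : t != 0 ->
  t^-1 *: (z - (1 - t) *: b) = t^-1 *: z + (1 - t^-1) *: b.
Proof.
move=> t0; rewrite scalerBr scalerA; congr (_ + _); rewrite -scaleNr; congr (_ *: _).
by field.
Qed.

Lemma inv_comb3 (t : R) (a b w : V) : t != 0 ->
  a - t^-1 *: (w - (1 - t) *: b) = t^-1 *: ((t *: a + (1 - t) *: b) - w).
Proof.
move=> t0; rewrite -[a in a - _]scale1r -(mulVf t0) -scalerA -scalerBr.
by congr (_ *: _); rewrite opprB addrA.
Qed.

Lemma lsp (C : set V) a b (t : R) : Defs.convex_set C -> ri C a -> C b ->
  0 < t -> t <= 1 -> ri C (t *: a + (1 - t) *: b).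
Proof.
move=> cC [Ca [d d0 sC]] Cb t0 t1; have tn0 : t != 0 by rewrite gt_eqF.
split; first exact: (cC _ _ Ca Cb _ (ltW t0) t1).
exists (t * d); first exact: mulr_gt0.
move=> w [/ballP zw aw].
set a' := t^-1 *: (w - (1 - t) *: b).
have wE : w = t *: a' + (1 - t) *: b by rewrite inv_comb1.
have aa' : aff C a'.
  by rewrite /a' inv_comb2 //; apply: aff_affine => //; exact: sub_aff.
have Ca' : C a'.
  apply: sC; split => //; apply/ballP; rewrite inv_comb3 // normrZ gtr0_norm ?invr_gt0 //.
  by rewrite ltr_pdivrMl.
by rewrite wE; exact: (cC _ _ Ca' Cb _ (ltW t0) t1).
Qed.

Lemma ri_open (S : set V) a (d : R) w : 0 < d -> ball a d `&` aff S `<=` S ->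
  `|a - w| < d / 2 -> aff S w -> ri S w.
Proof.
move=> d0 sS aw afw.
have d2 : 0 < d / 2 by rewrite divr_gt0.
split.
  apply: sS; split => //; apply/ballP; apply: lt_le_trans aw _.
  lra.
exists (d / 2) => // v [/ballP wv av]; apply: sS; split => //; apply/ballP.
apply: le_lt_trans (ler_distD w a v) _.
by rewrite [d]splitr ltrD.
Qed.

Lemma lsp_cl (C : set V) a b (t : R) : Defs.convex_set C -> ri C a -> closure C b ->
  aff C b -> 0 < t -> t <= 1 -> ri C (t *: a + (1 - t) *: b).
Proof.
move=> cC ra cb ab t0 t1; have [Ca [d d0 sC]] := ra.
have tn0 : t != 0 by rewrite gt_eqF.
set z := t *: a + (1 - t) *: b.
have az : aff C z by apply: aff_affine => //; exact: sub_aff.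
have e0 : 0 < t * d / 2 by rewrite divr_gt0 // mulr_gt0.
have [b' [Cb' bb']] := (@closure_normP _ _ C b).1 cb _ e0.
set a' := t^-1 *: (z - (1 - t) *: b').
have zE : z = t *: a' + (1 - t) *: b' by rewrite inv_comb1.
suff ra' : ri C a' by rewrite zE; exact: (lsp cC ra' Cb' t0 t1).
apply: (ri_open d0 sC).
  rewrite inv_comb3 // /z opprD addrACA subrr add0r -scalerBr scalerA normrZ.
  rewrite ger0_norm; last by rewrite mulr_ge0 ?invr_ge0 ?subr_ge0 // ltW.
  rewrite -mulrA.
  have h1 : `|b' - b| < t * d / 2 by rewrite distrC.
  apply: le_lt_trans (_ : t^-1 * `|b' - b| < d / 2).
    apply: ler_wpM2l; first by rewrite invr_ge0 ltW.
    rewrite -[leRHS]mul1r ler_wpM2r ?normr_ge0 //; lra.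
  by rewrite ltr_pdivrMl // mulrA.
by rewrite /a' inv_comb2 //; apply: aff_affine => //; exact: sub_aff.
Qed.

End Gen2.
Definition FD (R : realType) (V : normedModType R) :=
  (forall A : set V, affine_set A -> closure A `<=` A) /\
  (forall C : set V, Defs.convex_set C -> C !=set0 -> ri C !=set0).

Lemma real_bound (R : realType) (d c e : R) : 0 < d -> 0 <= c -> 0 <= e ->
  e <= d / (2 * (c + 1)) -> e * c < d.
Proof.
move=> d0 c0 e0; rewrite ler_pdivlMr; last by rewrite mulr_gt0 // ltr_wpDl.
move=> h; nra.
Qed.

Section NC.
Variables (R : realType) (V : normedModType R).
Implicit Types (S K G : set V).

Lemma ext_diff (z w : V) (e : R) :
  z - ((1 + e) *: z + (1 - (1 + e)) *: w) = e *: (w - z).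
Proof.
have -> : (1 - (1 + e)) = - e by ring.
rewrite scalerDl scale1r scaleNr scalerBr opprD opprK opprD addrA addrA subrr add0r.
by rewrite addrC.
Qed.

Lemma ri_ext S z x : ri S z -> aff S x -> exists2 e0 : R, 0 < e0 &
  forall e, 0 < e -> e <= e0 -> S ((1 + e) *: z + (1 - (1 + e)) *: x).
Proof.
move=> [Sz [d d0 sS]] ax.
exists (d / (2 * (`|x - z| + 1))).
  by rewrite divr_gt0 // mulr_gt0 // ltr_wpDl.
move=> e e0 ee0; apply: sS; split.
  apply/ballP; rewrite ext_diff normrZ gtr0_norm //.
  by apply: real_bound => //; exact: ltW.
by apply: aff_affine => //; exact: sub_aff.
Qed.

Section NCK.
Variables (fd : FD V) (K G : set V).
Hypotheses (cK : Defs.convex_set K) (KG : K `<=` G) (GK : G `<=` closure K).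

Lemma nc_aff : G `<=` aff K.
Proof.
move=> x /GK cx; apply: fd.1; first exact: aff_affine.
by apply: closureS cx; exact: sub_aff.
Qed.

Lemma nc_affE : aff G = aff K.
Proof.
apply/seteqP; split; last exact: aff_mono.
apply: aff_min; [exact: aff_affine | exact: nc_aff].
Qed.

Lemma nc_Kne z : G z -> K !=set0.
Proof.
move=> /GK cz; have [a [Ka _]] := (@closure_normP _ _ K z).1 cz 1 ltr01.
by exists a.
Qed.

Lemma nc_ri : ri G = ri K.
Proof.
apply/seteqP; split; last first.
  move=> z [Kz [d d0 sK]]; split; first exact: KG.
  by exists d => // v; rewrite nc_affE => /sK /KG.
move=> z [Gz [d d0 sG]].
have [w rw] := fd.2 K cK (nc_Kne Gz).
pose e := d / (2 * (`|w - z| + 1)).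
have e0 : 0 < e by rewrite divr_gt0 // mulr_gt0 // ltr_wpDl.
set z' := (1 + e) *: z + (1 - (1 + e)) *: w.
have az' : aff K z'.
  apply: aff_affine; [exact: nc_aff | exact: sub_aff (ri_sub rw)].
have Gz' : G z'.
  apply: sG; split; last by rewrite nc_affE.
  apply/ballP; rewrite ext_diff normrZ gtr0_norm //.
  by apply: real_bound => //; exact: ltW.
rewrite (ext_comb z w e0); apply: lsp_cl => //.
- exact: GK.
- by rewrite divr_gt0 // ltr_wpDl // ltW.
- by rewrite ler_pdivrMr ?ltr_wpDl // ?ltW //; lra.
Qed.

Lemma nc_lsp a b (t : R) : ri G a -> G b -> 0 < t -> t <= 1 ->
  ri G (t *: a + (1 - t) *: b).
Proof.
rewrite nc_ri => ra Gb t0 t1; apply: lsp_cl => //; [exact: GK | exact: nc_aff].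
Qed.

Lemma nc_ext z : G z ->
  (forall x, G x -> exists2 e : R, 0 < e & G ((1 + e) *: z + (1 - (1 + e)) *: x)) ->
  ri G z.
Proof.
move=> Gz hx; have [w rw] := fd.2 K cK (nc_Kne Gz).
have [e e0 Gz'] := hx w (KG (ri_sub rw)).
rewrite nc_ri (ext_comb z w e0); apply: lsp_cl => //.
- exact: GK.
- exact: nc_aff.
- by rewrite divr_gt0 // ltr_wpDl // ltW.
- by rewrite ler_pdivrMr ?ltr_wpDl // ?ltW //; lra.
Qed.

Lemma nc_ri_convex : Defs.convex_set (ri G).
Proof.
rewrite nc_ri => a b ra rb t t0 t1.
have [->|tn0] := eqVneq t 0; first by rewrite scale0r add0r subr0 scale1r.
apply: lsp => //; first exact: ri_sub rb.
by rewrite lt_neqAle eq_sym tn0.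
Qed.

Lemma nc_ri_ne z : G z -> ri G !=set0.
Proof. by move=> Gz; rewrite nc_ri; apply: fd.2 cK (nc_Kne Gz). Qed.

End NCK.
End NC.
Section Mx.
Variables (R : realType).

Lemma mx_entry_le (k l : nat) (M : 'M[R]_(k, l)) i j : `|M i j| <= `|M|.
Proof.
rewrite [leRHS]/Num.norm /= mx_normrE; apply/bigmax_geP; right => /=.
by exists (i, j).
Qed.

Lemma mx_norm_le (k l : nat) (M : 'M[R]_(k, l)) (c : R) : 0 <= c ->
  (forall i j, `|M i j| <= c) -> `|M| <= c.
Proof.
move=> c0 h; rewrite /Num.norm /= mx_normrE; apply/bigmax_leP; split => // -[i j] _; exact: h.
Qed.

Lemma mulmx_entry_bound (k l : nat) (u : 'rV[R]_k) (N : 'M[R]_(k, l)) j :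
  `|(u *m N) ord0 j| <= `|u| * \sum_i `|N i j|.
Proof.
rewrite mxE mulr_sumr; apply: le_trans (ler_norm_sum _ _ _) _.
apply: ler_sum => i _; rewrite normrM; apply: ler_wpM2r => //.
exact: mx_entry_le.
Qed.

Lemma span_fin (m : nat) (S : set 'rV[R]_m) :
  exists k (M : 'M[R]_(k, m)), (forall i, S (row i M)) /\
    (forall s, S s -> (s <= M)%MS).
Proof.
pose P r := exists k (M : 'M[R]_(k, m)), (forall i, S (row i M)) /\ (r <= \rank M)%N.
have P0 : P 0%N by exists 0%N, 0; split => // -[].
have nP : ~ P m.+1.
  move=> [k [M [_ h]]]; move: (leq_trans h (rank_leq_col M)).
  by rewrite ltnn.
have [r [Pr nPr]] : exists r, P r /\ ~ P r.+1.
  apply: contrapT => hn; apply: nP; elim: m.+1 => // r ih.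
  by apply: contrapT => nr; apply: hn; exists r.
move: Pr => [k [M [SM rM]]]; exists k, M; split => // s Ss.
apply: contrapT => /negP ns; apply: nPr.
exists (1 + k)%N, (col_mx s M); split.
  move=> i; case: (split_ordP i) => j ->; first by rewrite rowKu (ord1 j); have -> : row ord0 s = s by apply/matrixP => a b; rewrite mxE (ord1 a).
  by rewrite rowKd.
have lt : (M < s + M)%MS by rewrite ltmxE addsmxSr addsmx_sub (negbTE ns).
move: lt; rewrite ltmxErank => /andP[_ hr].
by rewrite -addsmxE; exact: leq_ltn_trans rM hr.
Qed.

End Mx.
Section Conv.
Variables (R : realType) (V : normedModType R).

Lemma conv_sum (C : set V) (c0 : V) k (d : 'I_k -> V) (l : 'I_k -> R) :
  Defs.convex_set C -> C c0 -> (forall i, C (c0 + d i)) ->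
  (forall i, 0 <= l i) -> \sum_i l i <= 1 -> C (c0 + \sum_i l i *: d i).
Proof.
move=> cC Cc0; elim: k d l => [|k ih] d l Cd l0 l1.
  by rewrite big_ord0 addr0.
rewrite big_ord_recr /=; move: l1; rewrite big_ord_recr /= => l1.
set lk := l ord_max in l1 *; set dm := d ord_max.
set D := \sum_(i < k) l (widen_ord (leqnSn k) i) *: d (widen_ord (leqnSn k) i).
set s := \sum_(i < k) l (widen_ord (leqnSn k) i) in l1.
have s0 : 0 <= s by apply: sumr_ge0 => i _.
have lk0 : 0 <= lk by exact: l0.
have [lk1|lk1] := eqVneq lk 1.
  have s00 : s = 0 by apply/eqP; rewrite eq_le s0 andbT; move: l1; rewrite lk1; lra.
  have D0 : D = 0.
    rewrite /D big1 // => i _.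
    by rewrite (psumr_eq0P _ s00) ?scale0r // => j _; exact: l0.
  by rewrite D0 add0r lk1 scale1r; exact: Cd.
have q0 : 0 < 1 - lk by rewrite subr_gt0 lt_neqAle lk1 /=; lra.
pose l' i := l (widen_ord (leqnSn k) i) / (1 - lk).
have := ih (fun i => d (widen_ord (leqnSn k) i)) l' (fun i => Cd _) _ _.
move=> /(_ _ _) Cp.
have Cp' : C (c0 + \sum_i l' i *: d (widen_ord (leqnSn k) i)).
  apply: Cp.
    by move=> i; rewrite /l' divr_ge0 // ltW.
  rewrite /l' -mulr_suml -/s ler_pdivrMr // mul1r; lra.
have lk1' : lk <= 1 by lra.
have := cC _ _ (Cd ord_max) Cp' lk lk0 lk1'.
congr C.
rewrite !scalerDr scaler_sumr.
have -> : \sum_i (1 - lk) *: (l' i *: d (widen_ord (leqnSn k) i)) = D.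
  apply: eq_bigr => i _; rewrite scalerA /l' mulrC divfK //; lra.
rewrite addrACA comb_same -/dm; congr (_ + _); exact: addrC.
Qed.

End Conv.
Section FDrow.
Variables (R : realType) (m : nat).

Lemma small_zero (y c : R) : 0 <= c -> (forall e, 0 < e -> `|y| <= e * c) -> y = 0.
Proof.
move=> c0 h; apply/eqP; apply: contraT => y0.
have ny : 0 < `|y| by rewrite normr_gt0.
have c1 : 0 < c + 1 by rewrite ltr_wpDl.
set t := `|y| / (c + 1).
have t0 : 0 < t by rewrite divr_gt0.
have ht : t * (c + 1) = `|y| by rewrite /t divfK // gt_eqF.
have := h t t0; nra.
Qed.

Lemma lin_sub (L : set 'rV[R]_m) : affine_set L -> L 0 ->
  (forall v c, L v -> L (c *: v)) /\ (forall v w, L v -> L w -> L (v + w)).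
Proof.
move=> aL L0.
have sc : forall v c, L v -> L (c *: v).
  by move=> v c Lv; have := aL v 0 Lv L0 c; congr L; rewrite scaler0; exact: addr0.
split => // v w Lv Lw; have := sc _ 2 (aL v w Lv Lw (1 / 2)).
rewrite scalerDr !scalerA.
have -> : 2 * (1 / 2) = 1 :> R by field.
have -> : 2 * (1 - 1 / 2) = 1 :> R by field.
by rewrite !scale1r.
Qed.

Lemma span_in (L : set 'rV[R]_m) k (M : 'M[R]_(k, m)) : affine_set L -> L 0 ->
  (forall i, L (row i M)) -> forall u, L (u *m M).
Proof.
move=> aL L0 LM u; have [sc ad] := lin_sub aL L0.
rewrite mulmx_sum_row; elim/big_ind: _ => //.
by move=> i _; apply: sc.
Qed.

Lemma rV_F1 (A : set 'rV[R]_m) : affine_set A -> closure A `<=` A.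
Proof.
move=> aA x cx.
have [a0 [Aa0 _]] := (@closure_normP _ _ A x).1 cx 1 ltr01.
pose L := [set v | A (a0 + v)].
have aL : affine_set L.
  move=> v w Lv Lw t; rewrite /L; have := aA _ _ Lv Lw t.
  by rewrite !scalerDr addrACA comb_same.
have L0 : L 0 by rewrite /L /= addr0.
have [k [M [LM SM]]] := span_fin L.
suff : (x - a0 <= M)%MS.
  move/mulmxKpV => e; have := span_in aL L0 LM ((x - a0) *m pinvmx M).
  by rewrite e /L /= addrC subrK.
rewrite submxE; apply/eqP/matrixP => i j; rewrite [RHS]mxE (ord1 i).
apply: (@small_zero _ (\sum_l `|cokermx M l j|)); first exact: sumr_ge0.
move=> e e0; have [a [Aa xa]] := (@closure_normP _ _ A x).1 cx e e0.
have h : (a - a0) *m cokermx M = 0.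
  by apply/eqP; rewrite -submxE; apply: SM; rewrite /L /= addrC subrK.
have -> : x - a0 = (x - a) + (a - a0) by rewrite addrA subrK.
rewrite mulmxDl h addr0; apply: le_trans (mulmx_entry_bound _ _ _) _.
by apply: ler_wpM2r; [exact: sumr_ge0 | exact: ltW].
Qed.

End FDrow.
Section FDrow2.
Variables (R : realType) (m : nat).

Lemma rV_F2 (C : set 'rV[R]_m) : Defs.convex_set C -> C !=set0 -> ri C !=set0.
Proof.
move=> cC [c0 Cc0].
pose L := [set v | C (c0 + v)].
have [k [M [LM SM]]] := span_fin L.
have conv : forall lam : 'rV[R]_k, (forall j, 0 <= lam ord0 j) ->
    \sum_j lam ord0 j <= 1 -> C (c0 + lam *m M).
  move=> lam h0 h1; rewrite mulmx_sum_row; exact: conv_sum.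
have affS : aff C `<=` [set z | (z - c0 <= M)%MS].
  apply: aff_min.
    move=> z w hz hw t /=.
    have -> : t *: z + (1 - t) *: w - c0 = t *: (z - c0) + (1 - t) *: (w - c0).
      by rewrite !scalerBr addrACA -opprD comb_same.
    by rewrite addmx_sub // scalemx_sub.
  by move=> z Cz /=; apply: SM; rewrite /L /= addrC subrK.
pose K : R := k%:R.
have K0 : 0 <= K by rewrite /K ler0n.
pose a : R := (K + 2)^-1.
have a0 : 0 < a by rewrite /a invr_gt0 ltr_wpDl.
have ha : a * (K + 2) = 1 by rewrite /a mulVf // gt_eqF // ltr_wpDl.
pose eps : R := a / (K + 1).
have e0 : 0 < eps by rewrite /eps divr_gt0 // ltr_wpDl.
have hea : eps * (K + 1) = a by rewrite /eps divfK // gt_eqF // ltr_wpDl.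
have ea : eps <= a by nra.
pose P := pinvmx M.
pose cP : R := \sum_j \sum_i `|P i j|.
have cP0 : 0 <= cP by apply: sumr_ge0 => j _; apply: sumr_ge0.
pose del : R := eps / (cP + 1).
have del0 : 0 < del by rewrite /del divr_gt0 // ltr_wpDl.
have hdel : del * (cP + 1) = eps by rewrite /del divfK // gt_eqF // ltr_wpDl.
have hdc : del * cP <= eps by nra.
pose u0 : 'rV[R]_k := const_mx a.
pose b := c0 + u0 *m M.
have hlam : forall lam : 'rV[R]_k, (forall j, `|lam ord0 j - a| <= eps) ->
    C (c0 + lam *m M).
  move=> lam hl; apply: conv.
    by move=> j; have := hl j; rewrite ler_norml => /andP[h1 h2]; lra.
  apply: le_trans (_ : \sum_(j < k) (a + eps) <= 1).
    by apply: ler_sum => j _; have := hl j; rewrite ler_norml => /andP[h1 h2]; lra.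
  rewrite sumr_const card_ord -mulr_natl -/K; nra.
exists b; split.
  by rewrite /b; apply: hlam => j; rewrite mxE subrr normr0 ltW.
exists del => // z [/ballP bz az].
have zc : (z - c0 <= M)%MS := affS _ az.
have zb : (z - b <= M)%MS.
  have -> : z - b = (z - c0) - u0 *m M by rewrite /b opprD addrA.
  by rewrite addmx_sub // -mulNmx submxMl.
pose lam := u0 + (z - b) *m P.
have -> : z = c0 + lam *m M.
  by rewrite /lam mulmxDl mulmxKpV // /b addrA addrC subrK.
apply: hlam => j; rewrite /lam mxE [u0 _ _]mxE addrAC subrr add0r.
apply: le_trans (mulmx_entry_bound _ _ _) _.
apply: le_trans hdc; apply: ler_pM => //; first exact: sumr_ge0.
  by rewrite distrC ltW.
by rewrite /cP (bigD1 j) //= lerDl; apply: sumr_ge0 => i _; exact: sumr_ge0.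
Qed.

Lemma rV_FD : FD 'rV[R]_m.
Proof. split; [exact: rV_F1 | exact: rV_F2]. Qed.

End FDrow2.
Section Transport.
Variables (R : realType) (V W : normedModType R).

Lemma FD_transport (f : V -> W) (L : R) :
  (forall t x y, f (t *: x + (1 - t) *: y) = t *: f x + (1 - t) *: f y) ->
  injective f -> 0 < L -> (forall x y, `|f x - f y| <= L * `|x - y|) ->
  FD W -> FD V.
Proof.
move=> hf fi L0 hL [F1 F2]; split.
  move=> A aA x cx.
  have afA : affine_set (f @` A).
    move=> _ _ [a Aa <-] [a' Aa' <-] t; exists (t *: a + (1 - t) *: a') => //.
    exact: aA.
  have : closure (f @` A) (f x).
    apply/closure_normP => e e0.
    have [a [Aa xa]] := (@closure_normP _ _ A x).1 cx (e / L) (divr_gt0 e0 L0).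
    exists (f a); split; first by exists a.
    by apply: le_lt_trans (hL x a) _; rewrite mulrC -ltr_pdivlMr.
  by move/(F1 _ afA) => [a Aa /fi <-].
move=> C cC [c Cc].
have cfC : Defs.convex_set (f @` C).
  move=> _ _ [a Aa <-] [a' Aa' <-] t t0 t1; exists (t *: a + (1 - t) *: a') => //.
  exact: cC.
have ne : (f @` C) !=set0 by exists (f c); exists c.
have [y [[b Cb fby] [d d0 sd]]] := F2 _ cfC ne.
subst y; exists b; split => //; exists (d / L); first by rewrite divr_gt0.
move=> z [/ballP bz az].
have : (f @` C) (f z).
  apply: sd; split.
    by apply/ballP; apply: le_lt_trans (hL b z) _; rewrite mulrC -ltr_pdivlMr.
  have : aff C `<=` [set v | aff (f @` C) (f v)].
    apply: aff_min.
      by move=> u v hu hv t /=; rewrite hf; exact: aff_affine.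
    by move=> v Cv /=; apply: sub_aff; exists v.
  exact.
by move=> [c' Cc' /fi <-].
Qed.

End Transport.

Section Prod.
Variables (R : realType) (n p : nat).

Lemma prod_FD : FD ('rV[R]_n * 'rV[R]_p)%type.
Proof.
apply: (@FD_transport _ _ _ (fun z => row_mx z.1 z.2) 1).
- by move=> t x y /=; rewrite !scale_row_mx add_row_mx.
- by move=> [x1 x2] [y1 y2] /= /eq_row_mx [-> ->].
- exact: ltr01.
- move=> x y; rewrite mul1r opp_row_mx add_row_mx.
  apply: mx_norm_le => // i j; rewrite prod_normE /=.
  case: (split_ordP j) => j' ->; [rewrite row_mxEl | rewrite row_mxEr];
    apply: le_trans (mx_entry_le _ _ _) _; rewrite le_max lexx ?orbT //.
- exact: rV_FD.
Qed.

End Prod.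
Lemma pair_comb (R : realType) (U W : normedModType R) (t : R) (a a' : U) (b b' : W) :
  t *: (a, b) + (1 - t) *: (a', b') = (t *: a + (1 - t) *: a', t *: b + (1 - t) *: b').
Proof. by []. Qed.

Lemma sub_comb (R : realType) (V : normedModType R) (t : R) (z w : V) :
  z - (t *: w + (1 - t) *: z) = t *: (z - w).
Proof.
rewrite scalerBr; apply/eqP; rewrite subr_eq; apply/eqP.
by rewrite addrA subrK comb_same.
Qed.

Theorem theorem3p5 (R : realType) (n p : nat)
  (F : 'rV[R]_n -> set 'rV[R]_p) (Omega : set 'rV[R]_n) :
  sv_nearly_convex F -> nearly_convex Omega ->
  ri (sv_dom F) `&` ri Omega !=set0 ->
  sv_nearly_convex (sv_restrict F Omega) /\
  ri (sv_gph (sv_restrict F Omega)) =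
    [set z | (ri (sv_dom F) `&` ri Omega) z.1 /\ ri (F z.1) z.2].
Proof.
move=> [KG [cKG [KGG GKG]]] [KO [cKO [KOO OKO]]] [x0 [rdx0 rox0]].
have fdV := @rV_FD R n; have fdP := @prod_FD R n p.
set G := sv_gph F in KGG GKG *.
set D := sv_dom F in rdx0 *.
have GE : forall z, G z = F z.1 z.2 by [].
pose KD := fst @` KG.
have cKD : Defs.convex_set KD.
  move=> _ _ [a Ka <-] [b Kb <-] t t0 t1; exists (t *: a + (1 - t) *: b) => //.
  exact: cKG.
have KDD : KD `<=` D by move=> _ [z Kz <-]; exists z.2; exact: KGG.
have DKD : D `<=` closure KD.
  move=> x [y Fxy]; have cz := GKG (x, y) Fxy.
  apply/closure_normP => e e0.
  have [k [Kk hk]] := (@closure_normP _ _ KG (x, y)).1 cz e e0.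
  exists k.1; split; first by exists k.
  apply: le_lt_trans hk; rewrite prod_normE /= le_max lexx //.
have stepA : forall x, ri D x -> exists y, ri G (x, y).
  move=> x rdx; have [y Fxy] := ri_sub rdx.
  have [[x1 y1] rw] := nc_ri_ne fdP cKG KGG GKG (z := (x, y)) Fxy.
  have Dx1 : D x1 by exists y1; exact: (ri_sub rw).
  have [e0 e00 he] := ri_ext rdx (sub_aff Dx1).
  have [y2 Fy2] := he e0 e00 (lexx _).
  set x2 := (1 + e0) *: x + (1 - (1 + e0)) *: x1 in Fy2.
  set t := e0 / (1 + e0).
  have t0 : 0 < t by rewrite divr_gt0 // ltr_wpDl // ltW.
  have t1 : t <= 1 by rewrite ler_pdivrMr ?ltr_wpDl // ?ltW //; lra.
  have := nc_lsp fdP cKG KGG GKG (b := (x2, y2)) rw Fy2 t0 t1.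
  rewrite pair_comb /x2 -(ext_comb x x1 e00) => h.
  by eexists; exact: h.
have [y0 rw0] := stepA x0 rdx0.
set w0 := (x0, y0) in rw0.
set H := sv_gph (sv_restrict F Omega).
have HE : forall z, H z <-> Omega z.1 /\ F z.1 z.2.
  move=> z; rewrite /H /sv_gph /sv_restrict /=.
  by case: (asboolP (Omega z.1)) => h; split => // -[].
pose KH := [set z | ri G z /\ ri Omega z.1].
have cKH : Defs.convex_set KH.
  move=> z z' [rz rz1] [rz' rz1'] t t0 t1; split.
    exact: (nc_ri_convex fdP cKG KGG GKG rz rz' t0 t1).
  exact: (nc_ri_convex fdV cKO KOO OKO rz1 rz1' t0 t1).
have KHH : KH `<=` H.
  by move=> z [rz rz1]; apply/HE; split; [exact: ri_sub rz1 | exact: ri_sub rz].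
have HKH : H `<=` closure KH.
  move=> z /HE [Oz Fz]; apply/closure_normP => e e0.
  set c := `|z - w0|.
  have c0 : 0 <= c by rewrite /c normr_ge0.
  set t := e / (e + c + 1).
  have ht : t * (e + c + 1) = e by rewrite /t divfK // gt_eqF //; lra.
  have t0 : 0 < t by rewrite /t divr_gt0 //; lra.
  have t1 : t <= 1 by nra.
  exists (t *: w0 + (1 - t) *: z); split.
    split; first exact: (nc_lsp fdP cKG KGG GKG rw0 Fz t0 t1).
    exact: (nc_lsp fdV cKO KOO OKO rox0 Oz t0 t1).
  by rewrite sub_comb normrZ gtr0_norm // -/c; nra.
split; first by exists KH.
have Hw0 : H w0 by apply/HE; split; [exact: ri_sub rox0 | exact: ri_sub rw0].
apply/seteqP; split.
- move=> [x y] rz /=.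
  have [Ox Fxy] := (HE (x, y)).1 (ri_sub rz).
  have [e0 e00 he] := ri_ext rz (sub_aff Hw0).
  have [Oz' Fz'] := (HE _).1 (he e0 e00 (lexx _)).
  set t := e0 / (1 + e0).
  have t0 : 0 < t by rewrite divr_gt0 // ltr_wpDl // ltW.
  have t1 : t <= 1 by rewrite ler_pdivrMr ?ltr_wpDl // ?ltW //; lra.
  have rG : ri G (x, y).
    rewrite (ext_comb (x, y) w0 e00); exact: (nc_lsp fdP cKG KGG GKG rw0 Fz' t0 t1).
  have rO : ri Omega x.
    have := congr1 fst (ext_comb (x, y) w0 e00) => /= ->.
    exact: (nc_lsp fdV cKO KOO OKO rox0 Oz' t0 t1).
  split; first split => //.
    apply: (nc_ext fdV cKD KDD DKD); first by exists y.
    move=> x' [y' Fxy'].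
    have [e1 e10 he1] := ri_ext rG (sub_aff (Fxy' : G (x', y'))).
    exists e1 => //; eexists; exact: (he1 e1 e10 (lexx _)).
  have [Gxy [d d0 sG]] := rG.
  split => //; exists d => // y' [/ballP bxy ay'].
  have : aff (F x) `<=` [set v | aff G (x, v)].
    apply: aff_min.
      move=> v v' hv hv' t' /=.
      by have := aff_affine hv hv' t'; rewrite pair_comb comb_same.
    by move=> v Fv /=; apply: sub_aff.
  move/(_ y' ay') => /= ay''.
  apply: (sG (x, y')); split => //; apply/ballP.
  by apply: le_lt_trans bxy; rewrite prod_normE /= subrr normr0 ge_max normr_ge0 lexx.
- move=> [x y] /= [[rdx rox] rfy].
  have [yq rq] := stepA x rdx.
  have [h0 h00 hh] := ri_ext rfy (sub_aff (ri_sub rq : F x yq)).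
  have Fy2 := hh h0 h00 (lexx _).
  set t := h0 / (1 + h0).
  have t0 : 0 < t by rewrite divr_gt0 // ltr_wpDl // ltW.
  have t1 : t <= 1 by rewrite ler_pdivrMr ?ltr_wpDl // ?ltW //; lra.
  have rG : ri G (x, y).
    rewrite (ext_comb (x, y) (x, yq) h00).
    apply: (nc_lsp fdP cKG KGG GKG rq _ t0 t1).
    by rewrite pair_comb comb_same.
  apply: (nc_ext fdP cKH KHH HKH).
    by apply/HE; split; [exact: ri_sub rox | exact: ri_sub rfy].
  move=> z' /HE [Oz' Fz'].
  have [e1 e10 he1] := ri_ext rG (sub_aff (Fz' : G z')).
  have [e2 e20 he2] := ri_ext rox (sub_aff Oz').
  have em0 : 0 < Num.min e1 e2 by rewrite lt_min e10 e20.
  exists (Num.min e1 e2) => //; apply/HE; split.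
    by apply: he2 => //; rewrite ge_min lexx orbT.
  by apply: he1 => //; rewrite ge_min lexx.
Qed.
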